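(* The Banach space $Y$ (the predual of $\mathcal{F}(\mathcal{M})$ described in the context) is not polyhedral, i.e. there is a finite-dimensional subspace of $Y$ whose unit ball is not a polytope.
   Context: For a pointed metric space $M$, ${\mathrm{Lip}}_0(M)$ is the space of real Lipschitz functions vanishing at the base point, normed by the Lipschitz constant $\|\cdot\|_L$. A function $f$ on a metric space is locally flat if $\lim_{x,y\to z}\frac{f(x)-f(y)}{d(x,y)}=0$ for every $z$. Let $p=(0,0)$, $q=(1,0)$, $S_n=\{(2^{-n}k,2^{-n}):k=0,\dots,2^n\}$ for $n\in\mathbb{N}$, and $\mathcal{M}=\{p,q\}\cup\bigcup_n S_n$ with the metric $d((x_1,y_1),(x_2,y_2))=|x_1-x_2|$ if $y_1=y_2$ and $=|y_1-y_2|+\min\{x_1+x_2,2-(x_1+x_2)\}$ if $y_1\neq y_2$, base point $p$. Let $V=\{(x,y)\in\mathcal{M}:x\in\{0,1\}\}$, $h(x,y)=x$, and $Y=\{f\in{\mathrm{Lip}}_0(\mathcal{M}):\lim_n\|(f-f(q)h)|_{S_n}\|_L=0,\ f|_V\text{ locally flat}\}$ with the Lipschitz norm. *)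

(* Defs.v *)
From Stdlib Require Import Reals Lra Lia.
Open Scope R_scope.

Definition pt := (R * R)%type.

Definition inS (n : nat) (z : pt) : Prop :=
  exists k : nat, (k <= 2 ^ n)%nat /\ fst z = INR k / 2 ^ n /\ snd z = / 2 ^ n.

Definition inM (z : pt) : Prop :=
  z = (0, 0) \/ z = (1, 0) \/ exists n : nat, (1 <= n)%nat /\ inS n z.

Definition Mpt : Type := { z : pt | inM z }.

Definition pM : Mpt := exist inM (0, 0) (or_introl eq_refl).
Definition qM : Mpt := exist inM (1, 0) (or_intror (or_introl eq_refl)).

Definition dist_pt (z w : pt) : R :=
  if Req_EM_T (snd z) (snd w) then Rabs (fst z - fst w)
  else Rabs (snd z - snd w) + Rmin (fst z + fst w) (2 - (fst z + fst w)).

Definition d (x y : Mpt) : R := dist_pt (proj1_sig x) (proj1_sig y).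

Definition h (x : Mpt) : R := fst (proj1_sig x).

Definition inV (x : Mpt) : Prop := fst (proj1_sig x) = 0 \/ fst (proj1_sig x) = 1.

Definition is_Lip0 (f : Mpt -> R) : Prop :=
  f pM = 0 /\ exists L : R, forall x y : Mpt, Rabs (f x - f y) <= L * d x y.

Definition Lip_le (f : Mpt -> R) (c : R) : Prop :=
  forall x y : Mpt, Rabs (f x - f y) <= c * d x y.

Definition Sn_cond (f : Mpt -> R) : Prop :=
  forall eps : R, 0 < eps -> exists N : nat, forall n : nat, (N <= n)%nat ->
    forall x y : Mpt, inS n (proj1_sig x) -> inS n (proj1_sig y) ->
      Rabs ((f x - f qM * h x) - (f y - f qM * h y)) <= eps * d x y.

Definition V_locally_flat (f : Mpt -> R) : Prop :=
  forall z : Mpt, inV z -> forall eps : R, 0 < eps -> exists delta : R, 0 < delta /\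
    forall x y : Mpt, inV x -> inV y -> x <> y -> d x z < delta -> d y z < delta ->
      Rabs (f x - f y) <= eps * d x y.

Definition inY (f : Mpt -> R) : Prop :=
  is_Lip0 f /\ Sn_cond f /\ V_locally_flat f.

Fixpoint fsum (k : nat) (g : nat -> R) : R :=
  match k with
  | O => 0
  | S k' => fsum k' g + g k'
  end.

Definition in_span (k : nat) (b : nat -> Mpt -> R) (f : Mpt -> R) : Prop :=
  exists a : nat -> R, forall x : Mpt, f x = fsum k (fun i => a i * b i x).

Definition in_conv (m : nat) (c : nat -> Mpt -> R) (f : Mpt -> R) : Prop :=
  exists lam : nat -> R, (forall i, (i < m)%nat -> 0 <= lam i) /\ fsum m lam = 1 /\
    forall x : Mpt, f x = fsum m (fun i => lam i * c i x).

Definition unit_ball_is_polytope (k : nat) (b : nat -> Mpt -> R) : Prop :=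
  exists (m : nat) (c : nat -> Mpt -> R), forall f : Mpt -> R,
    (in_span k b f /\ Lip_le f 1) <-> in_conv m c f.

(* Main.v *)
Require Import Defs.
From Stdlib Require Import Reals Lra Lia Classical.
Open Scope R_scope.

Definition fx (z : Mpt) : R := fst (proj1_sig z).
Definition sy (z : Mpt) : R := snd (proj1_sig z).

Lemma pow2_pos n : 0 < 2 ^ n.
Proof. apply pow_lt; lra. Qed.

Lemma pow2_ge n : (1 <= n)%nat -> 2 <= 2 ^ n.
Proof.
  intros Hn. replace 2 with (2 ^ 1) at 1 by (simpl; ring).
  apply Rle_pow; lra || lia.
Qed.

Lemma inv_pow2_lt a b : (a < b)%nat -> / 2 ^ b <= / 2 ^ a / 2.
Proof.
  intros H. unfold Rdiv. rewrite <- Rinv_mult.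
  apply Rinv_le_contravar.
  - apply Rmult_lt_0_compat; [apply pow2_pos| lra].
  - replace (2 ^ a * 2) with (2 ^ (S a)) by (simpl; ring).
    apply Rle_pow; lra || lia.
Qed.

Lemma M_bounds z : 0 <= fx z <= 1 /\ 0 <= sy z <= / 2.
Proof.
  destruct z as [[a b] H]; unfold fx, sy; simpl.
  destruct H as [H|[H|[n [Hn [k [Hk [H1 H2]]]]]]].
  - injection H; intros; subst; lra.
  - injection H; intros; subst; lra.
  - simpl in H1, H2. subst.
    pose proof (pow2_pos n). pose proof (pow2_ge n Hn).
    split; split.
    + unfold Rdiv. apply Rmult_le_pos; [apply pos_INR|left; apply Rinv_0_lt_compat; lra].
    + apply le_INR in Hk. rewrite pow_INR in Hk. replace (INR 2) with 2 in Hk by (simpl; ring).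
      unfold Rdiv. apply (Rmult_le_reg_r (2 ^ n)); [lra|].
      rewrite Rmult_assoc, Rinv_l by lra. lra.
    + left; apply Rinv_0_lt_compat; lra.
    + apply Rinv_le_contravar; lra.
Qed.

Lemma d_ge x y : Rabs (sy x - sy y) <= d x y /\ Rabs (fx x - fx y) <= d x y.
Proof.
  pose proof (M_bounds x); pose proof (M_bounds y).
  unfold d, dist_pt, sy, fx in *.
  destruct (Req_EM_T _ _) as [e|ne].
  - rewrite e. unfold Rminus; rewrite Rplus_opp_r, Rabs_R0. split; [apply Rabs_pos| lra].
  - split.
    + assert (0 <= Rmin (fst (proj1_sig x) + fst (proj1_sig y)) (2 - (fst (proj1_sig x) + fst (proj1_sig y)))).
      { apply Rmin_glb; lra. } lra.
    + pose proof (Rabs_pos (snd (proj1_sig x) - snd (proj1_sig y))).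
      assert (Rabs (fst (proj1_sig x) - fst (proj1_sig y)) <=
         Rmin (fst (proj1_sig x) + fst (proj1_sig y)) (2 - (fst (proj1_sig x) + fst (proj1_sig y)))).
      { apply Rmin_glb; apply Rabs_le; lra. } lra.
Qed.

Lemma d_pos x y : 0 <= d x y.
Proof. destruct (d_ge x y). pose proof (Rabs_pos (sy x - sy y)). lra. Qed.

Lemma d_same x y : sy x = sy y -> d x y = Rabs (fx x - fx y).
Proof.
  unfold d, dist_pt, sy, fx. intros e. destruct (Req_EM_T _ _); [reflexivity|contradiction].
Qed.

Lemma level_gap z w : 0 < sy z -> sy w <> sy z -> sy z / 2 <= Rabs (sy w - sy z).
Proof.
  destruct z as [[a b] H]; destruct w as [[a' b'] H']; unfold sy; simpl.
  intros Hz Hne.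
  destruct H as [H|[H|[n [Hn [k [Hk [H1 H2]]]]]]];
    [injection H; intros; subst; simpl in Hz; lra|injection H; intros; subst; simpl in Hz; lra|].
  simpl in H2; subst b.
  pose proof (pow2_pos n).
  assert (0 < / 2 ^ n) by (apply Rinv_0_lt_compat; lra).
  destruct H' as [H'|[H'|[m [Hm [k' [Hk' [H1' H2']]]]]]].
  - injection H'; intros; subst. rewrite Rabs_left by lra. lra.
  - injection H'; intros; subst. rewrite Rabs_left by lra. lra.
  - simpl in H2'; subst b'.
    destruct (Nat.lt_total m n) as [Hl|[He|Hl]].
    + pose proof (inv_pow2_lt _ _ Hl).
      rewrite Rabs_right by lra. lra.
    + subst; contradiction.
    + pose proof (inv_pow2_lt _ _ Hl).
      assert (0 < / 2 ^ m) by (apply Rinv_0_lt_compat; apply pow2_pos).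
      rewrite Rabs_left by lra. lra.
Qed.

Lemma Lip_xQ (F : Mpt -> R) (Q : R -> R) (A : R) :
  0 <= A ->
  (forall y, 0 <= y <= /2 -> Rabs (Q y) <= A) ->
  (forall y1 y2, 0 <= y1 <= /2 -> 0 <= y2 <= /2 -> Rabs (Q y1 - Q y2) <= A * Rabs (y1 - y2)) ->
  (forall z, F z = fx z * Q (sy z)) -> Lip_le F A.
Proof.
  intros HA HB HL HF x y. rewrite !HF.
  destruct (M_bounds x) as [[x1a x1b] [y1a y1b]].
  destruct (M_bounds y) as [[x2a x2b] [y2a y2b]].
  unfold d, dist_pt. fold (fx x) (fx y) (sy x) (sy y).
  destruct (Req_EM_T (sy x) (sy y)) as [e|ne].
  - rewrite e. replace (fx x * Q (sy y) - fx y * Q (sy y)) with (Q (sy y) * (fx x - fx y)) by ring.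
    rewrite Rabs_mult. apply Rmult_le_compat_r; [apply Rabs_pos|]. apply HB; lra.
  - pose proof (HB _ (conj y1a y1b)) as B1. pose proof (HB _ (conj y2a y2b)) as B2.
    pose proof (HL _ _ (conj y1a y1b) (conj y2a y2b)) as L12.
    pose proof (Rabs_pos (sy x - sy y)).
    assert (E1 : Rabs (fx x * Q (sy x) - fx y * Q (sy y)) <= A * (fx x + fx y)).
    { eapply Rle_trans; [apply Rabs_triang|]. rewrite Rabs_Ropp, !Rabs_mult.
      rewrite (Rabs_right (fx x)) by lra. rewrite (Rabs_right (fx y)) by lra.
      pose proof (Rmult_le_compat_l (fx x) _ _ x1a B1).
      pose proof (Rmult_le_compat_l (fx y) _ _ x2a B2). nra. }
    assert (E2 : Rabs (fx x * Q (sy x) - fx y * Q (sy y)) <= A * (Rabs (sy x - sy y) + (2 - (fx x + fx y)))).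
    { replace (fx x * Q (sy x) - fx y * Q (sy y)) with
        ((Q (sy x) - Q (sy y)) + (- ((1 - fx x) * Q (sy x)) + (1 - fx y) * Q (sy y))) by ring.
      eapply Rle_trans; [apply Rabs_triang|].
      eapply Rle_trans; [apply Rplus_le_compat_l; apply Rabs_triang|].
      rewrite Rabs_Ropp, !Rabs_mult.
      rewrite (Rabs_right (1 - fx x)) by lra. rewrite (Rabs_right (1 - fx y)) by lra.
      assert (0 <= 1 - fx x) by lra. assert (0 <= 1 - fx y) by lra.
      pose proof (Rmult_le_compat_l (1 - fx x) _ _ H0 B1).
      pose proof (Rmult_le_compat_l (1 - fx y) _ _ H1 B2). nra. }
    unfold Rmin. destruct (Rle_dec _ _); nra.
Qed.

Definition flatQ (Q : R -> R) : Prop :=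
  forall eps, 0 < eps -> exists delta, 0 < delta /\
    forall y1 y2, 0 <= y1 < delta -> 0 <= y2 < delta -> Rabs (Q y1 - Q y2) <= eps * Rabs (y1 - y2).

Lemma V01 x : inV x -> fx x = 0 \/ fx x = 1.
Proof. unfold inV, fx. auto. Qed.

Lemma flat_xQ (F : Mpt -> R) (Q : R -> R) :
  flatQ Q -> (forall z, F z = fx z * Q (sy z)) -> V_locally_flat F.
Proof.
  intros HQ HF z Vz eps Heps.
  destruct (M_bounds z) as [_ [sz0 _]].
  assert (Hfst : forall x, inV x -> d x z < 1 -> fx x = fx z).
  { intros x Vx Hd. destruct (d_ge x z) as [_ H2].
    destruct (V01 x Vx) as [e1|e1]; destruct (V01 z Vz) as [e2|e2]; rewrite e1, e2 in *; try reflexivity;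
      [rewrite Rabs_left in H2 by lra | rewrite Rabs_right in H2 by lra]; lra. }
  destruct (Req_dec (sy z) 0) as [z0|zpos].
  - destruct (HQ eps Heps) as [d0 [Hd0 Hq]].
    exists (Rmin d0 1). split; [apply Rmin_glb_lt; lra|].
    intros x y Vx Vy _ Hx Hy.
    pose proof (Rmin_l d0 1); pose proof (Rmin_r d0 1).
    assert (fx x = fx z) by (apply Hfst; auto; lra).
    assert (fx y = fx z) by (apply Hfst; auto; lra).
    assert (sx : 0 <= sy x < d0).
    { destruct (M_bounds x) as [_ [? _]]. destruct (d_ge x z) as [G3 _].
      rewrite z0, Rminus_0_r, Rabs_right in G3 by lra. lra. }
    assert (sy' : 0 <= sy y < d0).
    { destruct (M_bounds y) as [_ [? _]]. destruct (d_ge y z) as [G3 _].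
      rewrite z0, Rminus_0_r, Rabs_right in G3 by lra. lra. }
    rewrite !HF. rewrite H1, H2.
    replace (fx z * Q (sy x) - fx z * Q (sy y)) with (fx z * (Q (sy x) - Q (sy y))) by ring.
    rewrite Rabs_mult. destruct (V01 z Vz) as [e|e]; rewrite e.
    + rewrite Rabs_R0, Rmult_0_l. apply Rmult_le_pos; [lra|apply d_pos].
    + rewrite Rabs_R1, Rmult_1_l. eapply Rle_trans; [apply Hq; auto|].
      apply Rmult_le_compat_l; [lra|]. apply d_ge.
  - assert (zp : 0 < sy z) by lra.
    exists (Rmin 1 (sy z / 2)). split; [apply Rmin_glb_lt; lra|].
    assert (Hs : forall x, d x z < Rmin 1 (sy z / 2) -> sy x = sy z).
    { intros x Hd. destruct (Req_dec (sy x) (sy z)) as [e|ne]; auto.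
      pose proof (level_gap z x zp ne). destruct (d_ge x z).
      pose proof (Rmin_r 1 (sy z / 2)). lra. }
    intros x y Vx Vy _ Hx Hy.
    pose proof (Rmin_l 1 (sy z / 2)).
    rewrite !HF. rewrite (Hs x Hx), (Hs y Hy), (Hfst x Vx), (Hfst y Vy) by lra.
    unfold Rminus; rewrite Rplus_opp_r, Rabs_R0. apply Rmult_le_pos; [lra|apply d_pos].
Qed.

Lemma small_pow (delta : R) : 0 < delta -> exists N, forall n, (N <= n)%nat -> / 2 ^ n < delta.
Proof.
  intros Hd. destruct (pow_lt_1_zero (/2)) with (y := delta) as [N HN]; auto.
  { rewrite Rabs_right; lra. }
  exists N. intros n Hn. specialize (HN n Hn). rewrite pow_inv in HN.
  rewrite Rabs_right in HN; auto. left; apply Rinv_0_lt_compat, pow2_pos.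
Qed.

Lemma Sn_xQ (F : Mpt -> R) (Q : R -> R) :
  flatQ Q -> (forall z, F z = fx z * Q (sy z)) -> Sn_cond F.
Proof.
  intros HQ HF eps Heps.
  destruct (HQ eps Heps) as [d0 [Hd0 Hq]].
  destruct (small_pow d0 Hd0) as [N HN].
  exists N. intros n Hn x y Sx Sy.
  assert (ex : sy x = / 2 ^ n) by (destruct Sx as [k [_ [_ E]]]; exact E).
  assert (ey : sy y = / 2 ^ n) by (destruct Sy as [k [_ [_ E]]]; exact E).
  rewrite (d_same x y) by congruence.
  rewrite !HF. unfold h. fold (fx x) (fx y).
  assert (fq : fx qM = 1) by reflexivity. assert (sq : sy qM = 0) by reflexivity.
  rewrite fq, sq, ex, ey.
  replace (fx x * Q (/ 2 ^ n) - 1 * Q 0 * fx x - (fx y * Q (/ 2 ^ n) - 1 * Q 0 * fx y))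
    with ((fx x - fx y) * (Q (/ 2 ^ n) - Q 0)) by ring.
  rewrite Rabs_mult, Rmult_comm. apply Rmult_le_compat_r; [apply Rabs_pos|].
  pose proof (HN n Hn). pose proof (pow2_pos n).
  assert (0 < / 2 ^ n) by (apply Rinv_0_lt_compat; lra).
  eapply Rle_trans; [apply Hq; lra|].
  rewrite Rminus_0_r, Rabs_right by lra.
  assert (/ 2 ^ n <= 1).
  { rewrite <- Rinv_1. apply Rinv_le_contravar; [lra|]. replace 1 with (2 ^ 0) by reflexivity.
    apply Rle_pow; lra || lia. }
  nra.
Qed.

Lemma inY_xQ (F : Mpt -> R) (Q : R -> R) (A : R) :
  0 <= A ->
  (forall y, 0 <= y <= /2 -> Rabs (Q y) <= A) ->
  (forall y1 y2, 0 <= y1 <= /2 -> 0 <= y2 <= /2 -> Rabs (Q y1 - Q y2) <= A * Rabs (y1 - y2)) ->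
  flatQ Q -> (forall z, F z = fx z * Q (sy z)) -> inY F.
Proof.
  intros HA HB HL HQ HF. split; [|split].
  - split.
    + rewrite HF. unfold fx; simpl; ring.
    + exists A. apply (Lip_xQ F Q A); auto.
  - apply (Sn_xQ F Q); auto.
  - apply (flat_xQ F Q); auto.
Qed.

Lemma lip_helper (Q : R -> R) y1 y2 K B :
  Q y1 - Q y2 = (y1 - y2) * K -> Rabs K <= B -> Rabs (Q y1 - Q y2) <= B * Rabs (y1 - y2).
Proof.
  intros E HK. rewrite E, Rabs_mult, Rmult_comm. apply Rmult_le_compat_r; auto using Rabs_pos.
Qed.

Lemma abs3 a b c A B C : Rabs a <= A -> Rabs b <= B -> Rabs c <= C -> Rabs (a * b * c) <= A * B * C.
Proof.
  intros. rewrite !Rabs_mult. pose proof (Rabs_pos a); pose proof (Rabs_pos b); pose proof (Rabs_pos c).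
  apply Rmult_le_compat; try apply Rmult_le_pos; auto. apply Rmult_le_compat; auto.
Qed.

Definition Qf (y : R) : R := 1 - y ^ 4.
Definition Qg (y : R) : R := y ^ 2.
Definition Qab (a b : R) (y : R) : R := a * (1 - y ^ 4) + b * y ^ 2.

Lemma Qf_flat : flatQ Qf.
Proof.
  intros eps He. exists (Rmin 1 (eps / 4)). split; [apply Rmin_glb_lt; lra|].
  intros y1 y2 H1 H2. pose proof (Rmin_l 1 (eps/4)); pose proof (Rmin_r 1 (eps/4)).
  set (m := Rmin 1 (eps / 4)) in *.
  apply (lip_helper Qf y1 y2 (- (y1 + y2) * (y1 ^ 2 + y2 ^ 2))).
  { unfold Qf; ring. }
  rewrite Rabs_mult, Rabs_Ropp, Rabs_right by nra. rewrite Rabs_right by nra.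
  assert (y1 + y2 <= 2 * m) by lra. assert (y1 ^ 2 + y2 ^ 2 <= 2) by nra.
  assert ((y1 + y2) * (y1 ^ 2 + y2 ^ 2) <= 2 * m * 2) by nra. lra.
Qed.

Lemma Qg_flat : flatQ Qg.
Proof.
  intros eps He. exists (eps / 2). split; [lra|].
  intros y1 y2 H1 H2.
  apply (lip_helper Qg y1 y2 (y1 + y2)). { unfold Qg; ring. }
  rewrite Rabs_right by lra. lra.
Qed.

Lemma Qab_flat a b : flatQ (Qab a b).
Proof.
  intros eps He.
  destruct (Qf_flat (eps / (2 * (Rabs a + Rabs b + 1)))) as [d1 [Hd1 H1]].
  { apply Rdiv_lt_0_compat; [lra|]. pose proof (Rabs_pos a); pose proof (Rabs_pos b); lra. }
  destruct (Qg_flat (eps / (2 * (Rabs a + Rabs b + 1)))) as [d2 [Hd2 H2]].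
  { apply Rdiv_lt_0_compat; [lra|]. pose proof (Rabs_pos a); pose proof (Rabs_pos b); lra. }
  exists (Rmin d1 d2). split; [apply Rmin_glb_lt; lra|].
  intros y1 y2 Y1 Y2. pose proof (Rmin_l d1 d2); pose proof (Rmin_r d1 d2).
  specialize (H1 y1 y2 ltac:(lra) ltac:(lra)). specialize (H2 y1 y2 ltac:(lra) ltac:(lra)).
  set (e' := eps / (2 * (Rabs a + Rabs b + 1))) in *.
  replace (Qab a b y1 - Qab a b y2) with (a * (Qf y1 - Qf y2) + b * (Qg y1 - Qg y2))
    by (unfold Qab, Qf, Qg; ring).
  eapply Rle_trans; [apply Rabs_triang|]. rewrite !Rabs_mult.
  pose proof (Rabs_pos a); pose proof (Rabs_pos b); pose proof (Rabs_pos (y1 - y2)).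
  assert (e' * (2 * (Rabs a + Rabs b + 1)) = eps).
  { unfold e'. field. lra. }
  pose proof (Rmult_le_compat_l (Rabs a) _ _ H3 H1).
  pose proof (Rmult_le_compat_l (Rabs b) _ _ H4 H2).
  assert (0 <= e') by (unfold e'; apply Rlt_le, Rdiv_lt_0_compat; lra).
  nra.
Qed.

Lemma inY_f : inY (fun z => fx z * Qf (sy z)).
Proof.
  apply (inY_xQ _ Qf 1); auto; try lra.
  - intros y Hy. unfold Qf. apply Rabs_le.
    assert (0 <= y ^ 2 <= 1) by nra. replace (y ^ 4) with (y ^ 2 * y ^ 2) by ring. nra.
  - intros y1 y2 H1 H2. apply (lip_helper Qf y1 y2 (- (y1 + y2) * (y1 ^ 2 + y2 ^ 2))).
    { unfold Qf; ring. }
    rewrite Rabs_mult, Rabs_Ropp, Rabs_right by nra. rewrite Rabs_right by nra. nra.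
  - apply Qf_flat.
Qed.

Lemma inY_g : inY (fun z => fx z * Qg (sy z)).
Proof.
  apply (inY_xQ _ Qg 1); auto; try lra.
  - intros y Hy. unfold Qg. apply Rabs_le. nra.
  - intros y1 y2 H1 H2. apply (lip_helper Qg y1 y2 (y1 + y2)). { unfold Qg; ring. }
    rewrite Rabs_right by lra. lra.
  - apply Qg_flat.
Qed.

Definition alp (s : R) := / (1 + s * s).
Definition bet (s : R) := 2 * alp s * s.

Lemma Qab_tangent s y : Qab (alp s) (bet s) y = 1 - alp s * (y ^ 2 - s) ^ 2.
Proof. unfold Qab, bet, alp. field. nra. Qed.

Lemma alp_bounds s : 0 < alp s <= 1.
Proof.
  unfold alp. split. apply Rinv_0_lt_compat; nra.
  rewrite <- Rinv_1. apply Rinv_le_contravar; nra.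
Qed.

Lemma Lip_tangent s : 0 <= s <= / 4 ->
  Lip_le (fun z => fx z * Qab (alp s) (bet s) (sy z)) 1.
Proof.
  intros Hs. pose proof (alp_bounds s).
  apply (Lip_xQ _ (Qab (alp s) (bet s)) 1); auto; try lra.
  - intros y Hy. rewrite Qab_tangent. apply Rabs_le.
    assert (0 <= y ^ 2 <= / 4) by nra.
    assert (-1 <= y ^ 2 - s <= 1) by lra.
    assert (0 <= (y ^ 2 - s) ^ 2 <= 1).
    { split; [apply pow2_ge_0|]. replace ((y^2 - s)^2) with ((y^2-s)*(y^2-s)) by ring. nra. }
    assert (0 <= alp s * (y ^ 2 - s) ^ 2 <= 1) by (split; [apply Rmult_le_pos|]; nra).
    lra.
  - intros y1 y2 H1 H2.
    apply (lip_helper _ y1 y2 (- alp s * (y1 + y2) * (y1 ^ 2 + y2 ^ 2 - 2 * s))).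
    { rewrite !Qab_tangent; ring. }
    replace 1 with (1 * 1 * 1) by ring. apply abs3.
    + rewrite Rabs_Ropp, Rabs_right; lra.
    + apply Rabs_le; lra.
    + assert (0 <= y1 ^ 2 <= / 4) by nra. assert (0 <= y2 ^ 2 <= / 4) by nra.
      apply Rabs_le; lra.
Qed.

Lemma fsum_ext m (u v : nat -> R) : (forall i, (i < m)%nat -> u i = v i) -> fsum m u = fsum m v.
Proof.
  induction m; intros H; simpl; auto. rewrite IHm by (intros; apply H; lia). rewrite H by lia. reflexivity.
Qed.

Lemma fsum_minus m (u v : nat -> R) : fsum m (fun i => u i - v i) = fsum m u - fsum m v.
Proof. induction m; simpl; [ring|]. rewrite IHm. ring. Qed.

Lemma fsum_bound m (lam u : nat -> R) M :
  (forall i, (i < m)%nat -> 0 <= lam i) -> (forall i, (i < m)%nat -> u i <= M) ->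
  fsum m (fun i => lam i * u i) <= M * fsum m lam.
Proof.
  induction m; intros H1 H2; simpl; [lra|].
  assert (fsum m (fun i => lam i * u i) <= M * fsum m lam) by (apply IHm; intros; [apply H1|apply H2]; lia).
  assert (lam m * u m <= lam m * M) by (apply Rmult_le_compat_l; [apply H1|apply H2]; lia).
  lra.
Qed.

Lemma exists_max m (u : nat -> R) : (forall i, (i < m)%nat -> u i < 1) ->
  exists M, M < 1 /\ forall i, (i < m)%nat -> u i <= M.
Proof.
  induction m; intros H.
  - exists 0. split; [lra| intros; lia].
  - destruct IHm as [M [HM HM']]; [intros; apply H; lia|].
    exists (Rmax M (u m)). split.
    + apply Rmax_lub_lt; [exact HM|apply H; lia].
    + intros i Hi. destruct (Nat.eq_dec i m) as [->|ne]; [apply Rmax_r|].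
      eapply Rle_trans; [apply HM'; lia|apply Rmax_l].
Qed.

Lemma exists_ge1 m (lam u : nat -> R) :
  (forall i, (i < m)%nat -> 0 <= lam i) -> fsum m lam = 1 -> fsum m (fun i => lam i * u i) = 1 ->
  exists i, (i < m)%nat /\ 1 <= u i.
Proof.
  intros H1 H2 H3. apply NNPP. intros Hn.
  assert (forall i, (i < m)%nat -> u i < 1).
  { intros i Hi. apply Rnot_le_lt. intros Hu. apply Hn. exists i; auto. }
  destruct (exists_max m u H) as [M [HM HM']].
  pose proof (fsum_bound m lam u M H1 HM') as B. rewrite H2, H3 in B. lra.
Qed.

Lemma fsum_ind m i (u : nat -> R) :
  fsum m (fun j => (if Nat.eq_dec j i then 1 else 0) * u j) = if Nat.ltb i m then u i else 0.
Proof.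
  induction m; simpl; [reflexivity|]. rewrite IHm.
  destruct (Nat.eq_dec m i) as [->|ne].
  - rewrite (proj2 (Nat.ltb_ge i i)) by lia. rewrite (proj2 (Nat.ltb_lt i (S i))) by lia. ring.
  - destruct (Nat.ltb_spec i m); destruct (Nat.ltb_spec i (S m)); try lia; ring.
Qed.

Lemma pigeon m (P : nat -> nat -> Prop) :
  (forall j, (j <= m)%nat -> exists i, (i < m)%nat /\ P j i) ->
  exists j1 j2 i, (j1 < j2 <= m)%nat /\ P j1 i /\ P j2 i.
Proof.
  revert P. induction m; intros P H.
  - destruct (H 0%nat) as [i [Hi _]]; [lia|lia].
  - destruct (H (S m)) as [i0 [Hi0 P0]]; [lia|].
    destruct (classic (exists j, (j <= m)%nat /\ P j i0)) as [[j [Hj Pj]]|Hno].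
    + exists j, (S m), i0. repeat split; auto; lia.
    + destruct (IHm (fun j i => P j (if Nat.eq_dec i i0 then m else i))) as [j1 [j2 [i [Hj [A B]]]]].
      * intros j Hj. destruct (H j) as [i [Hi Pi]]; [lia|].
        assert (i <> i0) by (intros ->; apply Hno; eauto).
        destruct (Nat.eq_dec i m) as [->|ne].
        -- exists i0. split; [lia|]. destruct (Nat.eq_dec i0 i0); [auto|contradiction].
        -- exists i. split; [lia|]. destruct (Nat.eq_dec i i0); [contradiction|auto].
      * exists j1, j2, (if Nat.eq_dec i i0 then m else i). repeat split; auto; lia.
Qed.

Lemma quad a b s1 s2 s3 : 0 < s2 -> s2 < s3 -> s3 < s1 ->
  a * (1 - s1 * s1) + b * s1 <= 1 -> 1 <= a * (1 - s1 * s1) + b * s1 ->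
  1 <= a * (1 - s2 * s2) + b * s2 -> a * (1 - s3 * s3) + b * s3 <= 1 -> False.
Proof.
  intros h1 h2 h3 A1 A2 A3 A4.
  set (P := fun s => a * (1 - s * s) + b * s) in *.
  change (P s1 <= 1) in A1. change (1 <= P s1) in A2. change (1 <= P s2) in A3. change (P s3 <= 1) in A4.
  destruct (Rle_dec a 0) as [ha|ha].
  - assert (E : P s2 * s1 = P s1 * s2 + a * (s1 - s2) * (1 + s1 * s2)) by (unfold P; ring).
    assert (a * (s1 - s2) * (1 + s1 * s2) <= 0).
    { assert (0 <= (s1 - s2) * (1 + s1 * s2)) by (apply Rmult_le_pos; nra).
      assert (0 <= - a * ((s1 - s2) * (1 + s1 * s2))) by (apply Rmult_le_pos; lra). lra. }
    assert (P s1 * s2 <= 1 * s2) by (apply Rmult_le_compat_r; lra).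
    assert (1 * s1 <= P s2 * s1) by (apply Rmult_le_compat_r; lra). lra.
  - assert (E : P s3 * (s1 - s2) = P s1 * (s3 - s2) + P s2 * (s1 - s3) + a * (s3 - s2) * (s1 - s3) * (s1 - s2))
      by (unfold P; ring).
    assert (0 < a * (s3 - s2) * (s1 - s3) * (s1 - s2)).
    { repeat apply Rmult_lt_0_compat; lra. }
    assert (1 * (s3 - s2) <= P s1 * (s3 - s2)) by (apply Rmult_le_compat_r; lra).
    assert (1 * (s1 - s3) <= P s2 * (s1 - s3)) by (apply Rmult_le_compat_r; lra).
    assert (P s3 * (s1 - s2) <= 1 * (s1 - s2)) by (apply Rmult_le_compat_r; lra). lra.
Qed.

Definition T (n : nat) : R := / 2 ^ (S n).

Lemma inM1 n : inM (1, T n).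
Proof.
  right; right. exists (S n). split; [lia|]. exists (2 ^ (S n))%nat. split; [lia|].
  simpl fst; simpl snd. split; [|reflexivity].
  rewrite pow_INR. replace (INR 2) with 2 by (simpl; ring). field. apply Rgt_not_eq, pow2_pos.
Qed.

Lemma inM0 n : inM (0, T n).
Proof.
  right; right. exists (S n). split; [lia|]. exists 0%nat. split; [lia|].
  simpl fst; simpl snd. split; [|reflexivity]. simpl. unfold Rdiv; ring.
Qed.

Definition P1 n : Mpt := exist inM (1, T n) (inM1 n).
Definition P0 n : Mpt := exist inM (0, T n) (inM0 n).

Lemma dP n : d (P1 n) (P0 n) = 1.
Proof. rewrite d_same by reflexivity. unfold fx; simpl. rewrite Rminus_0_r, Rabs_R1. reflexivity. Qed.

Lemma T_pos n : 0 < T n.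
Proof. unfold T. apply Rinv_0_lt_compat, pow2_pos. Qed.

Lemma T_le n : T n <= / 2.
Proof. unfold T. apply Rinv_le_contravar; [lra|]. apply pow2_ge. lia. Qed.

Lemma T_lt a b : (a < b)%nat -> T b < T a.
Proof.
  intros H. unfold T. pose proof (inv_pow2_lt (S a) (S b) ltac:(lia)).
  pose proof (T_pos a). unfold T in *. lra.
Qed.

Definition fF (z : Mpt) : R := fx z * Qf (sy z).
Definition gF (z : Mpt) : R := fx z * Qg (sy z).
Definition bb (i : nat) : Mpt -> R := match i with O => fF | _ => gF end.

Definition phi (n : nat) (G : Mpt -> R) : R := G (P1 n) - G (P0 n).

Lemma phi_span (G : Mpt -> R) : in_span 2 bb G ->
  exists a0 a1, forall k, phi k G = a0 * (1 - (T k)^2 * (T k)^2) + a1 * (T k)^2.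
Proof.
  intros [a Ha]. exists (a 0%nat), (a 1%nat). intros k. unfold phi. rewrite !Ha. simpl.
  unfold fF, gF, fx, sy, Qf, Qg; simpl. ring.
Qed.

Lemma phi_le1 n G : Lip_le G 1 -> phi n G <= 1.
Proof.
  intros HL. specialize (HL (P1 n) (P0 n)). rewrite dP in HL. unfold phi.
  pose proof (Rle_abs (G (P1 n) - G (P0 n))). lra.
Qed.

Theorem proposition2p7 :
  exists (k : nat) (b : nat -> Mpt -> R),
    (forall i, (i < k)%nat -> inY (b i)) /\ ~ unit_ball_is_polytope k b.
Proof.
  exists 2%nat, bb. split.
  { intros i Hi. destruct i as [|[|i]]; [apply inY_f|apply inY_g|lia]. }
  intros [m [c Hc]].
  assert (Hball : forall i, (i < m)%nat -> in_span 2 bb (c i) /\ Lip_le (c i) 1).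
  { intros i Hi. apply Hc. exists (fun j => if Nat.eq_dec j i then 1 else 0). split; [|split].
    - intros j _. destruct (Nat.eq_dec j i); lra.
    - rewrite (fsum_ext m _ (fun j => (if Nat.eq_dec j i then 1 else 0) * (fun _ => 1) j))
        by (intros; ring).
      rewrite fsum_ind. destruct (Nat.ltb_spec i m); [reflexivity|lia].
    - intros x. rewrite (fsum_ind m i (fun j => c j x)). destruct (Nat.ltb_spec i m); [reflexivity|lia]. }
  assert (Hvert : forall n, exists i, (i < m)%nat /\ 1 <= phi n (c i)).
  { intros n. set (s := (T n) ^ 2).
    pose proof (T_pos n). pose proof (T_le n).
    assert (Hs : 0 <= s <= / 4) by (unfold s; nra).
    set (G := fun z => fx z * Qab (alp s) (bet s) (sy z)).
    assert (HG : in_span 2 bb G /\ Lip_le G 1).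
    { split.
      - exists (fun i => match i with O => alp s | _ => bet s end). intros x. simpl.
        unfold G, fF, gF, Qab, Qf, Qg. ring.
      - apply Lip_tangent; auto. }
    destruct (proj1 (Hc G) HG) as [lam [Hl1 [Hl2 Hl3]]].
    assert (E : phi n G = 1).
    { unfold phi, G. rewrite !Qab_tangent. unfold fx, sy; simpl. unfold s. ring. }
    apply (exists_ge1 m lam (fun i => phi n (c i)) Hl1 Hl2).
    rewrite <- E. unfold phi. rewrite (Hl3 (P1 n)), (Hl3 (P0 n)). rewrite <- fsum_minus.
    apply fsum_ext. intros; ring. }
  destruct (pigeon m (fun j i => in_span 2 bb (c i) /\ Lip_le (c i) 1 /\ 1 <= phi (2 * j) (c i)))
    as [j1 [j2 [i [Hj [[Sp1 [L1 A1]] [_ [_ A2]]]]]]].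
  { intros j _. destruct (Hvert (2 * j)%nat) as [i [Hi Hp]]. exists i. split; auto.
    destruct (Hball i Hi). auto. }
  destruct (phi_span (c i) Sp1) as [a0 [a1 Ha]].
  pose proof (phi_le1 (2 * j1) _ L1) as B1.
  pose proof (phi_le1 (S (2 * j1)) _ L1) as B3.
  rewrite !Ha in A1, A2, B1, B3.
  pose proof (T_lt (2 * j1) (S (2 * j1)) ltac:(lia)).
  pose proof (T_lt (S (2 * j1)) (2 * j2) ltac:(lia)).
  pose proof (T_pos (2 * j2)).
  apply (quad a0 a1 ((T (2 * j1))^2) ((T (2 * j2))^2) ((T (S (2 * j1)))^2)); auto; nra.
Qed.
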